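(* Let $G$ be a finite nilpotent group and let $H$ be an arbitrary finite group. Then $P_e(G)\cong P_e(H)$ (as graphs) if and only if $H$ is nilpotent and, for every prime $p$, $P_e(G_p)\cong P_e(H_p)$, where $G_p$ and $H_p$ denote the Sylow $p$-subgroups of $G$ and $H$, respectively.
   Context: All groups are finite. For a group $X$, the enhanced power graph $P_e(X)$ is the simple graph with vertex set $X$ in which two distinct vertices $x,y$ are adjacent if and only if the subgroup $\langle x,y\rangle$ is cyclic. *)

(* Defs.v *)
From mathcomp Require Import all_boot all_fingroup all_solvable.
Set Implicit Arguments. Unset Strict Implicit. Unset Printing Implicit Defensive.
Local Open Scope group_scope.

(* Enhanced power graph P_e(G) of a group G : {group gT}: vertex set G,
   distinct x, y adjacent iff <x, y> is cyclic. *)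
Definition epg_adj (gT : finGroupType) (x y : gT) : bool :=
  (x != y) && cyclic <<[set x; y]>>.

Definition epg_iso (gT hT : finGroupType) (G : {set gT}) (H : {set hT}) : Prop :=
  exists f : gT -> hT,
    [/\ {in G &, injective f}, f @: G = H &
        {in G &, forall x y, epg_adj (f x) (f y) = epg_adj x y}].

(* Main.v *)
Require Import Defs.
From mathcomp Require Import all_boot all_fingroup all_solvable.
Set Implicit Arguments. Unset Strict Implicit. Unset Printing Implicit Defensive.
Local Open Scope group_scope.

Definition Rc (gT : finGroupType) (x y : gT) := cyclic <<[set x; y]>>.

Section Gen.
Context {gT : finGroupType}.
Implicit Types x y z : gT.

Lemma RcC x y : Rc x y = Rc y x.
Proof. by rewrite /Rc setUC. Qed.

Lemma Rcxx x : Rc x x.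
Proof. by rewrite /Rc setUid cycle_cyclic. Qed.

Lemma Rc_sub (M : {group gT}) x y : cyclic M -> x \in M -> y \in M -> Rc x y.
Proof.
move=> cM xM yM; apply: cyclicS cM.
by rewrite gen_subG subUset !sub1set xM yM.
Qed.

Lemma Rc_memx x y : x \in <<[set x; y]>>.
Proof. by rewrite mem_gen // !inE eqxx. Qed.
Lemma Rc_memy x y : y \in <<[set x; y]>>.
Proof. by rewrite mem_gen // !inE eqxx orbT. Qed.

End Gen.

Lemma epg_Rc (gT hT : finGroupType) (G : {set gT}) (f : gT -> hT) :
  {in G &, injective f} ->
  {in G &, forall x y, epg_adj (f x) (f y) = epg_adj x y} ->
  {in G &, forall x y, Rc (f x) (f y) = Rc x y}.
Proof.
move=> inj adj x y xG yG; have := adj x y xG yG; rewrite /epg_adj.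
case: (eqVneq x y) => [-> _|nxy]; first by rewrite !Rcxx.
have nf : f x != f y by by apply: contra nxy => /eqP /(inj _ _ xG yG) ->.
by rewrite nf.
Qed.

Lemma Rc_epg (gT hT : finGroupType) (G : {set gT}) (f : gT -> hT) :
  {in G &, injective f} ->
  {in G &, forall x y, Rc (f x) (f y) = Rc x y} ->
  {in G &, forall x y, epg_adj (f x) (f y) = epg_adj x y}.
Proof.
move=> inj R x y xG yG; rewrite /epg_adj -/(Rc _ _) -/(Rc x y) R //.
case: (eqVneq x y) => [-> |nxy]; first by rewrite eqxx.
have nf : f x != f y by by apply: contra nxy => /eqP /(inj _ _ xG yG) ->.
by rewrite nf.
Qed.



Section Graph.
Variable gT : finGroupType.
Implicit Types x y z : gT.
Variable G : {group gT}.

Definition Nb x := [set y in G | Rc x y].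
Definition Cl x := [set y in G | Nb x \subset Nb y].
Definition Tc x m := [set y in G | (Nb y == Nb x) && (#[y] == m)].
Definition condc x m :=
  [forall z in Cl x, (#|Cl z| < #|Cl x|) ==> ~~ (m %| #|Cl z|)].

Definition mcP (M : {group gT}) := (M \subset G) && cyclic M.

Lemma Cl_maxP x y : x \in G -> y \in G ->
  (y \in Cl x) <-> (forall M : {group gT}, maxgroup M mcP -> x \in M -> y \in M).
Proof.
move=> xG yG; rewrite inE yG /=; split.
  move=> sN M /maxgroupP [/andP [sMG cM] maxM] xM.
  have [m defM] := cyclicP cM.
  have mM : m \in M by rewrite defM cycle_id.
  have : m \in Nb x by rewrite inE (subsetP sMG) //= (Rc_sub cM).
  move/(subsetP sN); rewrite inE => /andP [mG Rym].
  have P1 : mcP <<[set y; m]>>%G.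
    apply/andP; split; last exact: Rym.
    by rewrite gen_subG subUset !sub1set yG mG.
  have sM : M \subset <<[set y; m]>>%G.
    by rewrite defM cycle_subG Rc_memy.
  by rewrite -(maxM _ P1 sM) Rc_memx.
move=> hM; apply/subsetP => z; rewrite !inE => /andP [zG Rxz].
rewrite zG /=.
have P1 : mcP <<[set x; z]>>%G.
  apply/andP; split; last exact: Rxz.
    by rewrite gen_subG subUset !sub1set xG zG.
have [M maxM sM] := maxgroup_exists P1.
have xM : x \in M by rewrite (subsetP sM) ?Rc_memx.
have zM : z \in M by rewrite (subsetP sM) ?Rc_memy.
have /andP [_ cM] := maxgroupp maxM.
by apply: (Rc_sub cM) => //; apply: hM.
Qed.

Lemma Cl_sub x : Cl x \subset G.
Proof. by apply/subsetP => y; rewrite inE => /andP []. Qed.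

Lemma Cl_id x : x \in G -> x \in Cl x.
Proof. by move=> xG; rewrite inE xG subxx. Qed.

Lemma Cl_trans x y : y \in Cl x -> Cl y \subset Cl x.
Proof.
rewrite inE => /andP [_ s1]; apply/subsetP => z; rewrite !inE => /andP [-> s2].
exact: subset_trans s2.
Qed.

Lemma Cl_group x : x \in G -> group_set (Cl x).
Proof.
move=> xG; apply/group_setP; split.
  by apply/(Cl_maxP xG (group1 G)) => M _ _; apply: group1.
move=> y z yC zC.
have yG := subsetP (Cl_sub x) _ yC; have zG := subsetP (Cl_sub x) _ zC.
apply/(Cl_maxP xG (groupM yG zG)) => M mM xM.
by rewrite groupM //; [apply: (proj1 (Cl_maxP xG yG) yC) | apply: (proj1 (Cl_maxP xG zG) zC)].
Qed.

Lemma Cl_cyclic x (xG : x \in G) : cyclic (Cl x).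
Proof.
have P1 : mcP <[x]>%G by rewrite /mcP cycle_subG xG cycle_cyclic.
have [M maxM sM] := maxgroup_exists P1.
have /andP [_ cM] := maxgroupp maxM.
have -> : Cl x = Group (Cl_group xG) by [].
apply: cyclicS cM; apply/subsetP => y yC.
have yG := subsetP (Cl_sub x) _ yC.
apply: (proj1 (Cl_maxP xG yG) yC) => //.
by rewrite (subsetP sM) // cycle_id.
Qed.

End Graph.

Lemma cnt_cyc (gT : finGroupType) (C : {group gT}) m : cyclic C ->
  #|[set y in C | #[y] == m]| = if m %| #|C| then totient m else 0.
Proof.
move=> cC; case: ifP => dm; last first.
  rewrite (_ : [set y in C | #[y] == m] = set0) ?cards0 //.
  apply/setP => y; rewrite !inE; apply/negbTE; apply/andP => [[yC /eqP oy]].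
  by move: dm; rewrite -oy order_dvdG.
have [c defC] := cyclicP cC.
have m_gt0 : 0 < m by apply: dvdn_gt0 dm.
have oc : #[c] = #|C| by rewrite defC.
move: dm; rewrite -oc => /dvdnP [k ock].
have k_gt0 : 0 < k by move: (order_gt0 c); rewrite ock muln_gt0 => /andP [].
set a := c ^+ k.
have oa : #[a] = m.
  by rewrite /a orderXdiv ock ?dvdn_mulr // mulKn.
have aC : a \in C by rewrite defC groupX // cycle_id.
rewrite -oa totient_gen; apply: eq_card => y; rewrite !inE /generator.
apply/idP/idP.
  case/andP => yC /eqP oy.
  have cyc : cyclic C := cC.
  have := eq_subG_cyclic cyc (H := <[a]>%G) (K := <[y]>%G).
  rewrite !cycle_subG aC yC => /(_ isT isT) ->.
  by change (#[a] == #[y]); rewrite oy.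
move/eqP => e; have yC : y \in C.
  have : y \in <[a]> by rewrite e cycle_id.
  by apply: subsetP; rewrite cycle_subG.
by rewrite yC /=; apply/eqP; rewrite /order -e.
Qed.

Section Count.
Variable gT : finGroupType.
Variable G : {group gT}.
Implicit Types x y z : gT.

Local Notation Nb := (Nb G).
Local Notation Cl := (Cl G).
Local Notation Tc := (Tc G).
Local Notation condc := (condc G).

Lemma ClE x y : Nb x = Nb y -> Cl x = Cl y.
Proof. by move=> e; apply/setP => z; rewrite !inE e. Qed.

Lemma Tc_eq x m : x \in G ->
  Tc x m = if condc x m then [set y in Cl x | #[y] == m] else set0.
Proof.
move=> xG; case: ifP => cond.
  apply/setP => y; rewrite !inE; apply/idP/idP.
    by case/and3P => yG /eqP Nyx om; rewrite yG Nyx subxx om.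
  case/andP => /andP [yG sxy] /eqP om; rewrite yG om eqxx andbT /=.
  rewrite eqEsubset sxy andbT.
  case: (boolP (Nb y \subset Nb x)) => // nyx; exfalso.
  have yCx : y \in Cl x by rewrite inE yG sxy.
  have sCyx := Cl_trans yCx.
  have xnCy : x \notin Cl y by rewrite inE xG.
  have lt : #|Cl y| < #|Cl x|.
    by apply: proper_card; apply/properP; split => //; exists x => //; apply: Cl_id.
  move/forall_inP: cond => /(_ y yCx); rewrite lt /= => /negP; apply.
  rewrite -om; apply: (@order_dvdG _ (Group (Cl_group yG))).
  exact: Cl_id.
apply/setP => y; rewrite inE in_set0; apply/negP => /and3P [yG /eqP Nyx /eqP om].
suff : condc x m by rewrite cond.
apply/forall_inP => z zCx; apply/implyP => lt; apply/negP => dm.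
have eC : Cl y = Cl x := ClE Nyx.
have yCx : y \in Cl x by rewrite -eC Cl_id.
have zG : z \in G := subsetP (Cl_sub _ _) _ zCx.
have sCzx := Cl_trans zCx.
have cyc := Cl_cyclic xG.
have h1 : <[y]> \subset Group (Cl_group xG) by rewrite cycle_subG.
have := cardSg_cyclic (G := Group (Cl_group xG)) (H := <[y]>%G) (K := Group (Cl_group zG)) cyc h1 sCzx.
have e1 : #|<[y]>%G| = #[y] by [].
have e2 : #|Group (Cl_group zG)| = #|Cl z| by [].
rewrite e1 e2 om dm => /esym.
have e3 : (<[y]>%G \subset Group (Cl_group zG)) = (y \in Cl z) by rewrite cycle_subG.
rewrite e3 => yCz.
have := subset_leq_card (Cl_trans yCz); rewrite eC.
by rewrite leqNgt lt.
Qed.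

Lemma Tc_card x m : x \in G ->
  #|Tc x m| = if condc x m then (if m %| #|Cl x| then totient m else 0) else 0.
Proof.
move=> xG; rewrite Tc_eq //; case: ifP => _; last by rewrite cards0.
have := @cnt_cyc _ (Group (Cl_group xG)) m (Cl_cyclic xG).
move=> <-. by apply: eq_card => y.
Qed.

End Count.

Section Invariance.
Variables gT hT : finGroupType.
Variables (G : {group gT}) (H : {group hT}) (f : gT -> hT).
Hypothesis inj : {in G &, injective f}.
Hypothesis fGH : f @: G = H.
Hypothesis fR : {in G &, forall x y, Rc (f x) (f y) = Rc x y}.

Lemma imsetF_sub (A B : {set gT}) : A \subset G -> B \subset G ->
  (f @: A \subset f @: B) = (A \subset B).
Proof.
move=> sA sB; apply/idP/idP; last exact: imsetS.
move=> s; apply/subsetP => x xA.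
have /imsetP [y yB e] := subsetP s _ (imset_f f xA).
by rewrite (inj (subsetP sA _ xA) (subsetP sB _ yB) e).
Qed.

Lemma imsetF_eq (A B : {set gT}) : A \subset G -> B \subset G ->
  (f @: A == f @: B) = (A == B).
Proof. by move=> sA sB; rewrite !eqEsubset !imsetF_sub. Qed.

Lemma Nb_sub x : Nb G x \subset G.
Proof. by apply/subsetP => y; rewrite inE => /andP []. Qed.

Lemma memH_inv w : w \in H -> exists2 y, y \in G & w = f y.
Proof. by rewrite -fGH => /imsetP [y yG ->]; exists y. Qed.

Lemma NbF x : x \in G -> Nb H (f x) = f @: Nb G x.
Proof.
move=> xG; apply/setP => w; apply/idP/imsetP.
  rewrite inE => /andP [wH Rw]; have [y yG e] := memH_inv wH.
  by exists y => //; rewrite inE yG -fR // -e.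
case=> y; rewrite inE => /andP [yG Ry] ->.
by rewrite inE -fGH imset_f //= fR.
Qed.

Lemma ClF x : x \in G -> Cl H (f x) = f @: Cl G x.
Proof.
move=> xG; apply/setP => w; apply/idP/imsetP.
  rewrite inE => /andP [wH s]; have [y yG e] := memH_inv wH.
  exists y => //; rewrite inE yG /=.
  by move: s; rewrite e !NbF // imsetF_sub ?Nb_sub.
case=> y; rewrite inE => /andP [yG s] ->.
by rewrite inE -fGH imset_f //= !NbF // imsetF_sub ?Nb_sub.
Qed.

Lemma card_ClF x : x \in G -> #|Cl H (f x)| = #|Cl G x|.
Proof.
move=> xG; rewrite ClF // card_in_imset //.
by apply: sub_in2 inj => y; apply: (subsetP (Cl_sub _ _)).
Qed.

Lemma condF x m : x \in G -> condc H (f x) m = condc G x m.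
Proof.
move=> xG; rewrite /condc card_ClF //.
apply/forall_inP/forall_inP.
  move=> h z zC; have zG := subsetP (Cl_sub _ _) _ zC.
  have := h (f z); rewrite ClF // imset_f // card_ClF //.
  by apply.
move=> h w; rewrite ClF // => /imsetP [z zC ->].
have zG := subsetP (Cl_sub _ _) _ zC.
by rewrite card_ClF //; apply: h.
Qed.

Lemma NbF_eq x y : x \in G -> y \in G ->
  (Nb H (f x) == Nb H (f y)) = (Nb G x == Nb G y).
Proof. by move=> xG yG; rewrite !NbF // imsetF_eq ?Nb_sub. Qed.

Lemma TcF x m : x \in G -> #|Tc H (f x) m| = #|Tc G x m|.
Proof.
move=> xG; rewrite !Tc_card ?condF ?card_ClF //.
by rewrite -fGH imset_f.
Qed.

Definition fo (y : gT) : hT :=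
  nth 1 (enum (Tc H (f y) #[y])) (index y (enum (Tc G y #[y]))).

Lemma Tc_self y : y \in G -> y \in Tc G y #[y].
Proof. by move=> yG; rewrite inE yG !eqxx. Qed.

Lemma fo_in y : y \in G -> fo y \in Tc H (f y) #[y].
Proof.
move=> yG; rewrite /fo; rewrite -mem_enum; apply: mem_nth.
rewrite -cardE TcF // cardE index_mem mem_enum.
exact: Tc_self.
Qed.

Lemma foH y : y \in G -> fo y \in H.
Proof. by move/fo_in; rewrite inE => /andP []. Qed.

Lemma fo_Nb y : y \in G -> Nb H (fo y) = Nb H (f y).
Proof. by move/fo_in; rewrite inE => /and3P [_ /eqP]. Qed.

Lemma fo_order y : y \in G -> #[fo y] = #[y].
Proof. by move/fo_in; rewrite inE => /and3P [_ _ /eqP]. Qed.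

Lemma fo_inj : {in G &, injective fo}.
Proof.
move=> y z yG zG e.
have oyz : #[y] = #[z] by rewrite -fo_order // e fo_order.
have fHyz : Nb H (f y) = Nb H (f z) by rewrite -fo_Nb // e fo_Nb.
have Nyz : Nb G y = Nb G z by apply/eqP; rewrite -NbF_eq // fHyz.
have TG : Tc G y #[y] = Tc G z #[z] by rewrite /Tc Nyz oyz.
have TH : Tc H (f y) #[y] = Tc H (f z) #[z] by rewrite /Tc fHyz oyz.
move: e; rewrite /fo -TG -TH.
set sG := enum (Tc G y #[y]); set sH := enum (Tc H (f y) #[y]).
have yin : y \in sG by rewrite mem_enum Tc_self.
have zin : z \in sG by rewrite /sG TG mem_enum Tc_self.
have szs : size sH = size sG by rewrite /sH /sG -!cardE TcF.
move/eqP; rewrite nth_uniq ?enum_uniq ?szs ?index_mem //.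
move/eqP => ei.
by rewrite -(nth_index y yin) ei nth_index.
Qed.

Lemma card_GH : #|G| = #|H|.
Proof. by rewrite -fGH card_in_imset. Qed.

Lemma foGH : fo @: G = H.
Proof.
apply/eqP; rewrite eqEcard; apply/andP; split.
  by apply/subsetP => w /imsetP [y yG ->]; apply: foH.
by rewrite card_in_imset ?card_GH //; apply: fo_inj.
Qed.

Lemma foR : {in G &, forall x y, Rc (fo x) (fo y) = Rc x y}.
Proof.
move=> x y xG yG.
have e1 : Rc (fo x) (fo y) = (fo y \in Nb H (fo x)) by rewrite inE foH.
have e2 : Rc (f x) (fo y) = (fo y \in Nb H (f x)) by rewrite inE foH.
have fxH : f x \in H by rewrite -fGH imset_f.
have e3 : Rc (fo y) (f x) = (f x \in Nb H (fo y)) by rewrite inE fxH.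
have e4 : Rc (f y) (f x) = (f x \in Nb H (f y)) by rewrite inE fxH.
rewrite e1 fo_Nb // -e2 RcC e3 fo_Nb // -e4 fR // RcC.
by [].
Qed.

End Invariance.

Definition Sp (gT : finGroupType) (K : {set gT}) (p : nat) := [set x in K | p.-elt x].

Lemma Sp_pcore (gT : finGroupType) (G : {group gT}) p :
  nilpotent G -> Sp G p = 'O_p(G).
Proof.
move=> nilG; apply/setP => x; rewrite inE.
case xG : (x \in G); last by apply/esym/negbTE; apply: contraFN xG; apply: (subsetP (pcore_sub _ _)).
by rewrite (mem_Hall_pcore (nilpotent_pcore_Hall p nilG) xG).
Qed.

Lemma iso_restrict (gT hT : finGroupType) (G : {set gT}) (g : gT -> hT) (P : {set gT}) Q :
  {in G &, injective g} -> {in G &, forall x y, Rc (g x) (g y) = Rc x y} ->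
  P \subset G -> g @: P = Q -> epg_iso P Q.
Proof.
move=> inj R sPG gPQ; exists g; split => //.
  by apply: sub_in2 inj => x; apply: (subsetP sPG).
apply: Rc_epg; first by apply: sub_in2 inj => x; apply: (subsetP sPG).
by apply: sub_in2 R => x; apply: (subsetP sPG).
Qed.

Lemma forward (gT hT : finGroupType) (G : {group gT}) (H : {group hT}) :
  nilpotent G -> epg_iso G H ->
  nilpotent H /\
   (forall p : nat, prime p ->
      forall (P : {group gT}) (Q : {group hT}),
        P \in 'Syl_p(G) -> Q \in 'Syl_p(H) -> epg_iso P Q).
Proof.
move=> nilG [f [inj fGH adj]]; have fR := epg_Rc inj adj.
have ginj := fo_inj inj fGH fR.
have gGH := foGH inj fGH fR.
have gR := foR inj fGH fR.
have gord := fo_order inj fGH fR.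
set g := fo G H f in ginj gGH gR gord.
have cGH : #|G| = #|H| by rewrite -gGH card_in_imset.
have SpG p : g @: Sp G p = Sp H p.
  apply/setP => w; apply/imsetP/idP.
    case=> y; rewrite inE => /andP [yG py] ->.
    by rewrite inE -gGH imset_f //= /p_elt gord.
  rewrite inE -{1}gGH => /andP [/imsetP [y yG ->] py].
  by exists y => //; rewrite inE yG /=; move: py; rewrite /p_elt gord.
have sSG p : Sp G p \subset G by apply/subsetP => x; rewrite inE => /andP [].
have cSH p : #|Sp H p| = (#|H|`_p)%N.
  rewrite -SpG card_in_imset; last by apply: sub_in2 ginj => x; apply: (subsetP (sSG p)).
  by rewrite Sp_pcore // (card_Hall (nilpotent_pcore_Hall p nilG)) cGH.
have SylH p (Q : {group hT}) : p.-Sylow(H) Q -> (Q : {set hT}) = Sp H p.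
  move=> sylQ; apply/eqP; rewrite eqEcard cSH (card_Hall sylQ) leqnn andbT.
  apply/subsetP => x xQ; rewrite inE (subsetP (pHall_sub sylQ)) //=.
  exact: mem_p_elt (pHall_pgroup sylQ) xQ.
split.
  have sHF : H \subset 'F(H).
    rewrite -{1}(Sylow_gen H) gen_subG; apply/bigcupsP => P /SylowP [p pr sylP].
    apply: Fitting_max; last exact: pgroup_nil (pHall_pgroup sylP).
    rewrite /normal (pHall_sub sylP); apply/subsetP => h hH.
    apply/normP.
    have sylPh : p.-Sylow(H) (P :^ h)%G by rewrite pHallJ.
    by rewrite -[P :^ h]/(gval (P :^ h)%G) (SylH _ _ sylPh) (SylH _ _ sylP).
  have e : 'F(H) = H by apply/eqP; rewrite eqEsubset Fitting_sub sHF.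
  by have := Fitting_nil H; rewrite e.
move=> p pr P Q; rewrite !inE => sylP sylQ.
apply: (iso_restrict ginj gR (pHall_sub sylP)).
rewrite (SylH _ _ sylQ) -SpG; congr (_ @: _).
by rewrite Sp_pcore // (nilpotent_Hall_pcore nilG sylP).
Qed.

Section Split.
Variable gT : finGroupType.
Variable pi : nat_pred.
Variables A B : {group gT}.
Hypotheses (piA : pi.-group A) (pi'B : pi^'.-group B) (cBA : B \subset 'C(A)).

Lemma commAB a b : a \in A -> b \in B -> commute a b.
Proof. by move=> aA bB; apply/esym; apply: (centP (subsetP cBA b bB)). Qed.

Lemma consttAB a b : a \in A -> b \in B ->
  (a * b).`_pi = a /\ (a * b).`_pi^' = b.
Proof.
move=> aA bB; have cab := commAB aA bB.
have pa : pi.-elt a := mem_p_elt piA aA.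
have pb : pi^'.-elt b := mem_p_elt pi'B bB.
rewrite !consttM // (constt_p_elt pa) (constt_p_elt pb).
have -> : b.`_pi = 1 by apply/constt1P.
have -> : a.`_pi^' = 1 by apply/constt1P; rewrite p_eltNK.
by rewrite mulg1 mul1g.
Qed.

Lemma gen_mem (x y z : gT) : z \in <[x]> -> z \in <<[set x; y]>>.
Proof.
move=> zx; apply: (subsetP _ _ zx); rewrite cycle_subG; exact: Rc_memx.
Qed.

Lemma cyc_split a1 a2 b1 b2 : a1 \in A -> a2 \in A -> b1 \in B -> b2 \in B ->
  Rc (a1 * b1) (a2 * b2) = Rc a1 a2 && Rc b1 b2.
Proof.
move=> a1A a2A b1B b2B.
have [e1 f1] := consttAB a1A b1B; have [e2 f2] := consttAB a2A b2B.
apply/idP/andP.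
  move=> cxy; split; apply: cyclicS cxy; rewrite gen_subG subUset !sub1set.
    rewrite -{1}e1 -{2}e2 gen_mem ?cycle_constt //= setUC.
    by rewrite gen_mem ?cycle_constt.
  rewrite -{1}f1 -{2}f2 gen_mem ?cycle_constt //= setUC.
  by rewrite gen_mem ?cycle_constt.
case=> /cyclicP [a ea] /cyclicP [b eb].
have aA : a \in A.
  by apply: (subsetP _ _ (cycle_id a)); rewrite -ea gen_subG subUset !sub1set a1A a2A.
have bB : b \in B.
  by apply: (subsetP _ _ (cycle_id b)); rewrite -eb gen_subG subUset !sub1set b1B b2B.
have [ec fc] := consttAB aA bB.
set c := a * b in ec fc.
have sac : <[a]> \subset <[c]> by rewrite cycle_subG -ec cycle_constt.
have sbc : <[b]> \subset <[c]> by rewrite cycle_subG -fc cycle_constt.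
have ai (u : gT) : u \in <<[set a1; a2]>> -> u \in <[c]>.
  by rewrite ea => /(subsetP sac).
have bi (u : gT) : u \in <<[set b1; b2]>> -> u \in <[c]>.
  by rewrite eb => /(subsetP sbc).
apply: (cyclicS _ (cycle_cyclic c)).
rewrite gen_subG subUset !sub1set.
by apply/andP; split; apply: groupM; [apply: ai | apply: bi | apply: ai | apply: bi];
  rewrite ?Rc_memx ?Rc_memy.
Qed.

End Split.

Lemma card_iso (gT hT : finGroupType) (A : {set gT}) (B : {set hT}) :
  epg_iso A B -> #|A| = #|B|.
Proof. by case=> f [inj <- _]; rewrite card_in_imset. Qed.

Lemma prod2 (gT hT : finGroupType) (pi : nat_pred) (G A B : {group gT})
  (H A' B' : {group hT}) :
  A \x B = G -> A' \x B' = H -> pi.-group A -> pi^'.-group B ->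
  pi.-group A' -> pi^'.-group B' -> epg_iso A A' -> epg_iso B B' ->
  epg_iso G H.
Proof.
move=> defG defH piA pi'B piA' pi'B' isoA isoB.
have cA := card_iso isoA; have cB := card_iso isoB.
case: isoA => g [ginj gAA' gadj]; have gR := epg_Rc ginj gadj.
case: isoB => h [hinj hBB' hadj]; have hR := epg_Rc hinj hadj.
have [_ ABG cBA _] := dprodP defG.
have [_ ABH cBA' _] := dprodP defH.
have dec x : x \in G -> x.`_pi \in A /\ x.`_pi^' \in B.
  move=> xG; have [y [z [yA zB -> _]]] := mem_dprod defG xG.
  by have [-> ->] := consttAB piA pi'B cBA yA zB.
pose F x := g x.`_pi * h x.`_pi^'.
have gA x : x \in A -> g x \in A' by move=> xA; rewrite -gAA' imset_f.
have hB x : x \in B -> h x \in B' by move=> xB; rewrite -hBB' imset_f.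
have FH x : x \in G -> F x \in H.
  by move/dec => [xa xb]; rewrite -ABH mem_mulg ?gA ?hB.
have Fc x : x \in G -> (F x).`_pi = g x.`_pi /\ (F x).`_pi^' = h x.`_pi^'.
  by move/dec => [xa xb]; exact: (consttAB piA' pi'B' cBA' (gA _ xa) (hB _ xb)).
have Finj : {in G &, injective F}.
  move=> x y xG yG e.
  have [xa xb] := dec x xG; have [ya yb] := dec y yG.
  have [fx1 fx2] := Fc x xG; have [fy1 fy2] := Fc y yG.
  have e1 : x.`_pi = y.`_pi by apply: ginj => //; rewrite -fx1 -fy1 e.
  have e2 : x.`_pi^' = y.`_pi^' by apply: hinj => //; rewrite -fx2 -fy2 e.
  by rewrite -(consttC pi x) -(consttC pi y) e1 e2.
exists F; split => //.
  apply/eqP; rewrite eqEcard; apply/andP; split.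
    by apply/subsetP => w /imsetP [x xG ->]; apply: FH.
  rewrite card_in_imset // -(dprod_card defG) -(dprod_card defH).
  by rewrite -cA -cB.
apply: Rc_epg => // x y xG yG.
have [xa xb] := dec x xG; have [ya yb] := dec y yG.
have [fx1 fx2] := Fc x xG; have [fy1 fy2] := Fc y yG.
rewrite -{2}(consttC pi x) -{2}(consttC pi y) (cyc_split piA pi'B cBA) //.
rewrite /F (cyc_split piA' pi'B' cBA') ?gA ?hB //.
by rewrite gR ?hR.
Qed.

Lemma iso_trivial (gT hT : finGroupType) (G : {group gT}) (H : {group hT}) :
  G :=: 1 -> H :=: 1 -> epg_iso G H.
Proof.
move=> G1 H1; exists (fun _ => 1); split.
- by move=> x y; rewrite G1 => /set1P -> /set1P ->.
- by rewrite G1 H1 imset_set1.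
- by move=> x y; rewrite G1 => /set1P e1 /set1P e2; rewrite e1 e2 /epg_adj !eqxx.
Qed.

Lemma backward n (gT hT : finGroupType) (G : {group gT}) (H : {group hT}) :
  #|G| <= n -> nilpotent G -> nilpotent H ->
   (forall p : nat, prime p ->
      forall (P : {group gT}) (Q : {group hT}),
        P \in 'Syl_p(G) -> Q \in 'Syl_p(H) -> epg_iso P Q) ->
  epg_iso G H.
Proof.
elim: n G H => [|n IH] G H; first by rewrite leqNgt cardG_gt0.
move=> cG nilG nilH hyp.
have [G1 | [p pr pG]] := trivgVpdiv G.
  have [H1 | [p pr pH]] := trivgVpdiv H; first exact: iso_trivial.
  have [P sylP] := Sylow_exists p G; have [Q sylQ] := Sylow_exists p H.
  have iPQ : epg_iso P Q by apply: (hyp p pr); rewrite inE.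
  have := card_iso iPQ.
  rewrite (card_Hall sylP) (card_Hall sylQ) G1 cards1 partn1 => e.
  have : 1 < (#|H|`_p)%N by rewrite p_part_gt1 mem_primes pr cardG_gt0 pH.
  by rewrite -e.
have defG := nilpotent_pcoreC p nilG; have defH := nilpotent_pcoreC p nilH.
apply: (prod2 (pi := p) defG defH); rewrite ?pcore_pgroup //.
  by apply: (hyp p pr); rewrite inE nilpotent_pcore_Hall.
have cA1 : 1 < #|'O_p(G)|.
  by rewrite (card_Hall (nilpotent_pcore_Hall p nilG)) p_part_gt1 mem_primes pr cardG_gt0 pG.
apply: IH.
- rewrite -ltnS; apply: leq_trans cG; rewrite -(dprod_card defG).
  by rewrite -[X in X < _]mul1n ltn_pmul2r.
- exact: nilpotentS (pcore_sub _ _) nilG.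
- exact: nilpotentS (pcore_sub _ _) nilH.
move=> q qr P Q; rewrite !inE => sylP sylQ.
case: (eqVneq q p) => [eqp | nqp].
  subst q; apply: iso_trivial; apply/eqP; rewrite trivg_card1; apply/eqP.
    apply: (@pnat_1 p); first exact: pHall_pgroup sylP.
    exact: pgroupS (pHall_sub sylP) (pcore_pgroup _ _).
  apply: (@pnat_1 p); first exact: pHall_pgroup sylQ.
  exact: pgroupS (pHall_sub sylQ) (pcore_pgroup _ _).
have part (K : {group _}) : nilpotent K -> (#|'O_p^'(K)|`_q = #|K|`_q)%N.
  move=> nilK; rewrite -(dprod_card (nilpotent_pcoreC p nilK)) partnM ?cardG_gt0 //.
  rewrite (part_p'nat (n := #|'O_p(K)|)) ?mul1n //.
  apply: sub_in_pnat (pcore_pgroup p K) => r _; rewrite !inE => /eqP ->.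
  by rewrite eq_sym.
apply: hyp qr _ _ _ _; rewrite inE pHallE.
  by rewrite (subset_trans (pHall_sub sylP)) ?pcore_sub //= (card_Hall sylP) part.
by rewrite (subset_trans (pHall_sub sylQ)) ?pcore_sub //= (card_Hall sylQ) part.
Qed.

Unset Implicit Arguments.
Set Strict Implicit.

Theorem theorem1 (gT hT : finGroupType) (G : {group gT}) (H : {group hT}) :
  nilpotent G ->
  (epg_iso G H <->
   nilpotent H /\
   (forall p : nat, prime p ->
      forall (P : {group gT}) (Q : {group hT}),
        P \in 'Syl_p(G) -> Q \in 'Syl_p(H) -> epg_iso P Q)).
Proof.
move=> nilG; split; first exact: forward.
by case=> nilH hyp; apply: (@backward #|G|).
Qed.
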